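(* Let $S\in Sp(4n,\mathbb{R})$ be such that \begin{equation*} S\begin{pmatrix} \varGamma & 0 \\ 0 & \varGamma \end{pmatrix}S^{T}=\begin{pmatrix} \cdot & 0 \\ 0 & * \end{pmatrix} \quad \text{for all covariance matrices}\quad\varGamma\in\mathbb{R}^{2n\times 2n}, \end{equation*} where $*,\cdot$ denote arbitrary covariance matrices in $\mathbb{R}^{2n\times 2n}$ (i.e. the output is block diagonal with $2n\times 2n$ blocks). Then \begin{equation*} \begin{split} S&= \begin{pmatrix} X & 0 \\ 0 & Y \end{pmatrix}\frac{1}{\sqrt{1+\alpha^{2}}} \begin{pmatrix} \mathbb{1}_{2n} & \alpha\mathbb{1}_{2n}\\ -\alpha\mathbb{1}_{2n} & \mathbb{1}_{2n} \end{pmatrix} \quad\text{or}\quad S= \begin{pmatrix} 0 & X \\ Y & 0 \end{pmatrix}\frac{1}{\sqrt{1+\gamma^{2}}} \begin{pmatrix} \mathbb{1}_{2n} & -\gamma\mathbb{1}_{2n}\\ \gamma\mathbb{1}_{2n} & \mathbb{1}_{2n} \end{pmatrix}, \end{split} \end{equation*} where $X,Y\in Sp(2n,\mathbb{R})$, $\alpha,\gamma\in\mathbb{R}\cup\{\pm\infty\}$, and $\mathbb{1}_{2n}$ is the $2n\times 2n$ identity matrix.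
   Context: Setting: $n$-mode (and $2n$-mode) bosonic continuous-variable systems with canonical operators $R=(Q_1,P_1,\ldots,Q_n,P_n)$ satisfying $[R_k,R_l]=i\sigma_{kl}$, where $\sigma=\bigoplus_{i=1}^{n}\begin{pmatrix}0&1\\-1&0\end{pmatrix}$. $Sp(2m,\mathbb{R})$ denotes the group of real $2m\times 2m$ matrices $S$ with $S\sigma S^{T}=\sigma$ (with $\sigma$ the symplectic form of the appropriate size). A covariance matrix (CM) of an $n$-mode state is a real symmetric $2n\times 2n$ matrix $\varGamma$ with entries $\varGamma_{kl}=\mathrm{Tr}[\rho\{R_k-d_k,R_l-d_l\}]$, and genuine quantum CMs satisfy $\varGamma+i\sigma\geq 0$. A symplectic $S$ acts on a CM by $\varGamma\mapsto S\varGamma S^T$. *)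

(* Defs.v *)
From HB Require Import structures.
From mathcomp Require Import all_boot all_order all_algebra.
From mathcomp Require Import reals constructive_ereal.
From mathcomp.real_closed Require Import complex.
Set Implicit Arguments. Unset Strict Implicit. Unset Printing Implicit Defensive.
Import Order.TTheory GRing.Theory Num.Theory.
Local Open Scope ring_scope.

(* Symplectic form on m modes (phase space R^(2m)), ordering (Q1,P1,...,Qm,Pm):
   sigma = (+)_{i=1}^m [[0,1],[-1,0]], i.e. entry (2k,2k+1) = 1,
   entry (2k+1,2k) = -1 (0-based), all others 0. *)
Definition sympl_form {R : pzRingType} (m : nat) : 'M[R]_(m.*2) :=
  \matrix_(i < m.*2, j < m.*2)
    if ~~ odd i && (j == i.+1 :> nat) then 1
    else if odd i && (j.+1 == i :> nat) then -1 else 0.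

Definition symplectic {R : pzRingType} (m : nat) (S : 'M[R]_(m.*2)) : Prop :=
  S *m sympl_form m *m S^T = sympl_form m.

Definition sympl_form2 {R : pzRingType} (n : nat) : 'M[R]_(n.*2 + n.*2) :=
  block_mx (sympl_form n) 0 0 (sympl_form n).

Definition symplectic2 {R : pzRingType} (n : nat) (S : 'M[R]_(n.*2 + n.*2)) : Prop :=
  S *m sympl_form2 n *m S^T = sympl_form2 n.

(* Positive semidefinite complex (Hermitian) matrix: v^* M v >= 0 for all v
   (in a numClosedField, 0 <= z means z is real and nonnegative). *)
Definition psd_c {R : rcfType} (m : nat) (M : 'M[R[i]]_m) : Prop :=
  forall v : 'cV[R[i]]_m, 0 <= ((map_mx (@conjc R) v)^T *m M *m v) 0 0.

Definition cov_mx {R : rcfType} (n : nat) (G : 'M[R]_(n.*2)) : Prop :=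
  G^T = G /\
  psd_c (map_mx (fun x : R => (x%:C)%C) G
         + ('i)%C *: map_mx (fun x : R => (x%:C)%C) (sympl_form n)).

(* The matrix  1/sqrt(1+a^2) [[1, a 1],[-a 1, 1]]  (blocks of size 2n) for
   a in R u {+oo,-oo}; for a = +oo / -oo it is the limit
   [[0, 1],[-1, 0]] / [[0, -1],[1, 0]]. *)
Definition mix_mx {R : rcfType} (n : nat) (a : \bar R) : 'M[R]_(n.*2 + n.*2) :=
  match a with
  | EFin a => (Num.sqrt (1 + a ^+ 2))^-1 *: block_mx 1 (a%:M) (- a%:M) 1
  | +oo%E => block_mx 0 1 (-1) 0
  | -oo%E => block_mx 0 (-1) 1 0
  end.

Definition mix'_mx {R : rcfType} (n : nat) (g : \bar R) : 'M[R]_(n.*2 + n.*2) :=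
  match g with
  | EFin g => (Num.sqrt (1 + g ^+ 2))^-1 *: block_mx 1 (- g%:M) (g%:M) 1
  | +oo%E => block_mx 0 (-1) 1 0
  | -oo%E => block_mx 0 1 (-1) 0
  end.

(* Main.v *)
Require Import Defs.
From HB Require Import structures.
From mathcomp Require Import all_boot all_order all_algebra.
From mathcomp Require Import reals constructive_ereal.
From mathcomp.real_closed Require Import complex.
From mathcomp Require Import ring lra.
Set Implicit Arguments. Unset Strict Implicit. Unset Printing Implicit Defensive.
Import Order.TTheory GRing.Theory Num.Theory.
Local Open Scope ring_scope.
Definition pt (i : nat) : nat := if odd i then i.-1 else i.+1.
Definition sg {R : pzRingType} (i : nat) : R := if odd i then -1 else 1.

Lemma sfE {R : pzRingType} n (i j : 'I_(n.*2)) :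
  sympl_form n i j = if (j == pt i :> nat) then sg i else 0 :> R.
Proof.
rewrite /sympl_form mxE /pt /sg.
case oi: (odd i) => /=; last by [].
case: eqP => [h|h]; case: eqP => [h'|h'] //.
- by case: h'; rewrite -h.
- by case: h; rewrite h'; move: oi; case: (nat_of_ord i).
Qed.

Lemma pt_lt n (i : 'I_(n.*2)) : (pt i < n.*2)%N.
Proof.
rewrite /pt; case: (boolP (odd i)) => oi.
  by apply: leq_ltn_trans (ltn_ord i); apply: leq_pred.
move: (nat_of_ord i) (ltn_ord i) oi => k; rewrite leq_eqVlt => /orP[/eqP h|] //.
by rewrite -(negbK (odd k)) -oddS h odd_double.
Qed.

Lemma ptK i : pt (pt i) = i.
Proof.
rewrite /pt; case: i => [|i] //=; case oi: (odd i) => /=; rewrite ?oi //.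
Qed.

Lemma sg_pt {R : pzRingType} i : sg (pt i) = - sg i :> R.
Proof.
rewrite /pt /sg; case: i => [|i] /=. by [].
by case oi: (odd i) => /=; rewrite ?oi ?opprK.
Qed.

Lemma pt_eq i j : (j == pt i) = (i == pt j).
Proof.
by apply/eqP/eqP => ->; rewrite ptK.
Qed.

Lemma sf_tr {R : pzRingType} n : (sympl_form n)^T = - sympl_form n :> 'M[R]_(n.*2).
Proof.
apply/matrixP => i j; rewrite [LHS]mxE [RHS]mxE !sfE pt_eq.
case: eqP => [->|]; last by rewrite oppr0.
by rewrite sg_pt.
Qed.

Lemma sf_sq {R : pzRingType} n : sympl_form n *m sympl_form n = - 1%:M :> 'M[R]_(n.*2).
Proof.
apply/matrixP => i j; rewrite [LHS]mxE [RHS]mxE [X in - X]mxE.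
rewrite (bigD1 (Ordinal (pt_lt i))) //= big1; last first.
  move=> k /eqP hk; rewrite sfE; case: eqP => h; last by rewrite mul0r.
  by case: hk; apply: val_inj.
rewrite !sfE /= eqxx ptK addr0 sg_pt.
case: (eqVneq i j) => [->|h].
  by rewrite eqxx /sg mulrN; case: odd; rewrite ?mulN1r ?mul1r ?opprK.
have -> : (j == i :> nat) = false by apply/negbTE; rewrite eq_sym.
by rewrite mulr0 mulr0n oppr0.
Qed.

Section Cov.
Local Open Scope complex_scope.
Local Open Scope ring_scope.

Lemma qform_ge0 (R : rcfType) p m (K : 'M[R[i]]_(p,m)) (v : 'cV[R[i]]_m) :
  0 <= ((map_mx (@conjc R) v)^T *m (map_mx (@conjc R) K^T *m K) *m v) 0 0.
Proof.
have -> : (map_mx (@conjc R) v)^T = map_mx (@conjc R) v^T by rewrite map_trmx.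
rewrite mulmxA -map_mxM -trmx_mul -mulmxA mxE.
apply: sumr_ge0 => k _; rewrite !mxE mulrC; exact: mulcJ_ge0.
Qed.

Lemma conj_MC (R : rcfType) p q (Y : 'M[R]_(p,q)) :
  map_mx (@conjc R) (map_mx (fun x : R => x%:C) Y) = map_mx (fun x : R => x%:C) Y.
Proof. by apply/matrixP => i j; rewrite !mxE conjc_real. Qed.

Lemma cov_rank1 (R : rcfType) n (x : 'cV[R]_(n.*2)) : cov_mx (1%:M + x *m x^T).
Proof.
split.
  by rewrite linearD /= trmx1 trmx_mul trmxK.
pose K : 'M[R[i]]_(n.*2) := 1%:M + 'i *: map_mx (fun x : R => x%:C) (sympl_form n).
have KhK : map_mx (@conjc R) K^T = K.
  rewrite /K linearD /= trmx1 map_mxD map_mx1 linearZ /= map_mxZ -map_trmx conj_MC.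
  rewrite map_trmx sf_tr map_mxN /= scalerN -scaleNr; congr (_ + (_ *: _)).
  by apply/eqP; rewrite eq_complex /= oppr0 opprK !eqxx.
have KK : K *m K = 2%:R *: K.
  rewrite /K mulmxDl !mulmxDr !mul1mx !mulmx1 -!scalemxAl -!scalemxAr scalerA.
  rewrite -map_mxM sf_sq map_mxN map_mx1 /= -expr2 sqr_i scaleN1r opprK.
  by rewrite scalerDr scaler_nat mulr2n scaler_nat mulr2n [X in _ + X = _]addrC addrACA.
move=> v.
have -> : map_mx (fun x : R => x%:C) (1%:M + x *m x^T) + 'i%C *: map_mx (fun x : R => x%:C) (sympl_form n)
   = 2%:R^-1 *: (map_mx (@conjc R) K^T *m K)
     + map_mx (@conjc R) ((map_mx (fun x : R => x%:C) x)^T)^T *m (map_mx (fun x : R => x%:C) x)^T.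
  rewrite KhK KK scalerA mulVf ?scale1r ?pnatr_eq0 //.
  have -> : map_mx (@conjc R) ((map_mx (fun x : R => x%:C) x)^T)^T = map_mx (fun x : R => x%:C) x.
    by apply/matrixP => i j; rewrite !mxE conjc_real.
  by rewrite /K map_mxD map_mx1 map_mxM map_trmx addrAC.
rewrite mulmxDr mulmxDl mxE; apply: addr_ge0; last exact: qform_ge0.
rewrite -scalemxAr -scalemxAl mxE; apply: mulr_ge0; last exact: qform_ge0.
by rewrite invr_ge0 ler0n.
Qed.
End Cov.
Lemma cV_nz (R : zmodType) m (u : 'cV[R]_m) : u != 0 -> exists i, u i 0 != 0.
Proof.
move=> h; case: (boolP [exists i, u i 0 != 0]) => [/existsP//|/existsPn h'].
case/eqP: h; apply/matrixP => i j; rewrite (ord1 j) mxE; apply/eqP.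
by move: (h' i); rewrite negbK.
Qed.

Lemma rV_nz (R : zmodType) m (u : 'rV[R]_m) : u != 0 -> exists i, u 0 i != 0.
Proof.
move=> h; case: (boolP [exists i, u 0 i != 0]) => [/existsP//|/existsPn h'].
case/eqP: h; apply/matrixP => j i; rewrite (ord1 j) mxE; apply/eqP.
by move: (h' i); rewrite negbK.
Qed.

Lemma mx_zero (R : pzRingType) p m (M : 'M[R]_(p, m)) :
  (forall y : 'cV_m, M *m y = 0) -> M = 0.
Proof.
move=> h; apply/matrixP => i j.
have := congr1 (fun X : 'M[R]_(p,1) => X i 0) (h (delta_mx j 0)).
by rewrite -colE !mxE.
Qed.

Lemma mx_nz (R : pzRingType) p m (M : 'M[R]_(p, m)) :
  M != 0 -> exists y : 'cV_m, M *m y != 0.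
Proof.
move=> h; case: (boolP [exists j, M *m delta_mx j (0 : 'I_1) != 0]) => [/existsP[j hj]|/existsPn h'].
  by exists (delta_mx j 0).
case/eqP: h; apply/matrixP => i j.
by move: (h' j); rewrite negbK -colE => /eqP/matrixP/(_ i 0); rewrite !mxE.
Qed.

Lemma mx11_mul (R : pzRingType) m (P : 'M[R]_(1, m)) (Q : 'M[R]_(m, 1)) k (X Y : 'M[R]_(1,k)) :
  (X *m Y^T) 0 0 = \sum_i X 0 i * Y 0 i.
Proof. by rewrite mxE; apply: eq_bigr => i _; rewrite mxE. Qed.

Lemma m11 (R : pzRingType) (X Y : 'M[R]_1) : (X *m Y) 0 0 = X 0 0 * Y 0 0.
Proof. by rewrite mxE big_ord1. Qed.

Lemma outerE (R : pzRingType) m (u w : 'cV[R]_m) i j : (u *m w^T) i j = u i 0 * w j 0.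
Proof. by rewrite mxE big_ord1 mxE. Qed.

Lemma sumsq_ge0 (R : realFieldType) m (w : 'rV[R]_m) : 0 <= (w *m w^T) 0 0.
Proof. rewrite mxE; apply: sumr_ge0 => i _; rewrite mxE -expr2; exact: sqr_ge0. Qed.

Lemma sumsq_eq0 (R : realFieldType) m (w : 'rV[R]_m) : (w *m w^T) 0 0 = 0 -> w = 0.
Proof.
rewrite mxE => h; apply/matrixP => z i; rewrite (ord1 z) mxE.
have hk : forall k : 'I_m, true -> 0 <= w 0 k * w^T k 0.
  by move=> k _; rewrite mxE -expr2 sqr_ge0.
have := psumr_eq0P hk h (i := i) isT.
by rewrite mxE -expr2 => /eqP; rewrite sqrf_eq0 => /eqP.
Qed.

Lemma exists_orth (R : fieldType) m (u : 'cV[R]_m) : (1 < m)%N ->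
  exists p : 'rV_m, p != 0 /\ p *m u = 0.
Proof.
move=> m1; pose i0 := Ordinal (ltnW m1); pose i1 := Ordinal m1.
have i01 : i0 != i1 by [].
case: (eqVneq (u i1 0) 0) => h.
  exists (delta_mx 0 i1); split.
    by apply/eqP => /matrixP/(_ 0 i1); rewrite !mxE !eqxx /= => /eqP; rewrite oner_eq0.
  by rewrite -rowE; apply/matrixP => z w; rewrite (ord1 z) (ord1 w) !mxE h.
exists (u i1 0 *: delta_mx 0 i0 - u i0 0 *: delta_mx 0 i1); split.
  apply/eqP => /matrixP/(_ 0 i0); rewrite !mxE !eqxx (negbTE i01) /= mulr1 mulr0 subr0.
  by apply/eqP.
rewrite mulmxBl -!scalemxAl -!rowE; apply/matrixP => z w; rewrite (ord1 z) (ord1 w) !mxE.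
by rewrite mulrC subrr.
Qed.

Lemma ortho (R : fieldType) (V : lmodType R) (r1 r2 s1 s2 : R) (a b : V) :
  (s1 != 0) || (s2 != 0) -> r1 * s1 + r2 * s2 = 0 -> s1 *: a + s2 *: b = 0 ->
  r1 *: b - r2 *: a = 0.
Proof.
move=> /orP [hs|hs] hrs hab.
  have ha : s1 *: a = - (s2 *: b) by apply/eqP; rewrite -subr_eq0 opprK hab.
  suff: s1 *: (r1 *: b - r2 *: a) = 0 by move/eqP; rewrite scaler_eq0 (negbTE hs) => /eqP.
  rewrite scalerBr !scalerA [s1 * r2]mulrC -(scalerA r2 s1 a) ha scalerN opprK scalerA -scalerDl.
  by rewrite [s1 * r1]mulrC hrs scale0r.
have hb : s2 *: b = - (s1 *: a) by apply/eqP; rewrite -subr_eq0 opprK addrC hab.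
suff: s2 *: (r1 *: b - r2 *: a) = 0 by move/eqP; rewrite scaler_eq0 (negbTE hs) => /eqP.
rewrite scalerBr !scalerA [s2 * r1]mulrC -(scalerA r1 s2 b) hb scalerN scalerA -opprD -scalerDl.
by rewrite [s2 * r2]mulrC hrs scale0r oppr0.
Qed.

Lemma trD (R : zmodType) p q (X Y : 'M[R]_(p,q)) : (X + Y)^T = X^T + Y^T.
Proof. by apply/matrixP => i j; rewrite !mxE. Qed.
Lemma trZ (R : pzRingType) p q c (X : 'M[R]_(p,q)) : (c *: X)^T = c *: X^T.
Proof. by apply/matrixP => i j; rewrite !mxE. Qed.
Lemma trN (R : zmodType) p q (X : 'M[R]_(p,q)) : (- X)^T = - X^T.
Proof. by apply/matrixP => i j; rewrite !mxE. Qed.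

Lemma kill (R : rcfType) m (A B C D : 'M[R]_m) (x : 'cV_m) (r1 r2 s1 s2 : R) :
  (1 < m)%N ->
  (forall p : 'rV_m, p *m A = 0 -> p *m B = 0 -> p = 0) ->
  (forall y z : 'cV_m, A *m (y *m z^T + z *m y^T) *m C^T
                     + B *m (y *m z^T + z *m y^T) *m D^T = 0) ->
  (r1 != 0) || (r2 != 0) -> (s1 != 0) || (s2 != 0) -> r1 * s1 + r2 * s2 = 0 ->
  s1 *: (A *m x) + s2 *: (B *m x) = 0 ->
  (forall y, exists a b : R,
      s1 *: (A *m y) + s2 *: (B *m y) = a *: (A *m x) + b *: (B *m x)) ->
  r1 *: C + r2 *: D = 0.
Proof.
move=> m1 hAB hPhi hr hs hrs hx hy.
apply/eqP; apply/negPn/negP => hM.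
have [j hj] : exists j, row j (r1 *: C + r2 *: D) != 0.
  case: (boolP [exists j, row j (r1 *: C + r2 *: D) != 0]) => [/existsP//|/existsPn h'].
  case/eqP: hM; apply/row_matrixP => j; rewrite row0.
  by move: (h' j); rewrite negbK => /eqP.
set M := r1 *: C + r2 *: D in hj *.
set g := row j M in hj.
have [p [pnz pu]] := exists_orth (if s1 != 0 then B *m x else A *m x) m1.
have [pA pB] : p *m (A *m x) = 0 /\ p *m (B *m x) = 0.
  have h2 : s1 *: (p *m (A *m x)) + s2 *: (p *m (B *m x)) = 0.
    by have := congr1 (mulmx p) hx; rewrite mulmx0 mulmxDr -!scalemxAr.
  move: pu; case: ifP => [hs1 pu|/negbT/negPn/eqP s10 pu].
    split=> //; move: h2; rewrite pu scaler0 addr0 => /eqP.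
    by rewrite scaler_eq0 (negbTE hs1) => /eqP.
  move: hs; rewrite s10 eqxx /= => hs2.
  split=> //; move: h2; rewrite pu scaler0 add0r => /eqP.
  by rewrite scaler_eq0 (negbTE hs2) => /eqP.
set a := p *m A; set b := p *m B.
have hab : s1 *: a + s2 *: b = 0.
  apply: (mx_zero (M := s1 *: a + s2 *: b)) => y.
  rewrite mulmxDl -!scalemxAl /a /b -!mulmxA.
  case: (hy y) => al [be hyy]; have := congr1 (mulmx p) hyy.
  by rewrite !mulmxDr -!scalemxAr pA pB !scaler0 addr0 => ->.
have hba := ortho hs hrs hab.
pose rho := r1 ^+ 2 + r2 ^+ 2.
have rho0 : rho != 0.
  by rewrite /rho paddr_eq0 ?sqr_ge0 // !sqrf_eq0 negb_and.
have hb' : r1 *: b = r2 *: a by apply/eqP; rewrite -subr_eq0 hba.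
set f := r1 *: a + r2 *: b.
have ea : rho *: a = r1 *: f.
  rewrite /f scalerDr (scalerA r1 r2 b) mulrC -(scalerA r2 r1 b) hb' !scalerA -scalerDl.
  by rewrite /rho !expr2.
have eb : rho *: b = r2 *: f.
  rewrite /f scalerDr (scalerA r2 r1 a) mulrC -(scalerA r1 r2 a) -hb' !scalerA -scalerDl.
  by rewrite /rho !expr2.
have key : forall G, rho *: (p *m (A *m G *m C^T + B *m G *m D^T)) = f *m G *m M^T.
  move=> G; rewrite mulmxDr !mulmxA -/a -/b scalerDr.
  rewrite [rho *: (a *m G *m C^T)]scalemxAl [rho *: (a *m G)]scalemxAl ea.
  rewrite [rho *: (b *m G *m D^T)]scalemxAl [rho *: (b *m G)]scalemxAl eb.
  by rewrite /M trD !trZ mulmxDr -!scalemxAr -!scalemxAl.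
have h0 : f *m (f^T *m g + g^T *m f) *m M^T = 0.
  by rewrite -key; have := hPhi f^T g^T; rewrite !trmxK => ->; rewrite mulmx0 scaler0.
have h1 : f *m (f^T *m g + g^T *m f) *m g^T = 0.
  have e : M^T *m delta_mx j 0 = g^T by rewrite /g rowE trmx_mul trmx_delta.
  by have := congr1 (fun X => X *m delta_mx j (0 : 'I_1)) h0; rewrite /= mul0mx -[_ *m M^T *m _]mulmxA e.
have h2 : (f *m f^T) 0 0 * (g *m g^T) 0 0 + (f *m g^T) 0 0 * (f *m g^T) 0 0 = 0.
  have h2' : f *m f^T *m (g *m g^T) + f *m g^T *m (f *m g^T) = 0.
    by rewrite -h1 mulmxDr mulmxDl !mulmxA.
  have := congr1 (fun X : 'M[R]_1 => X 0 0) h2'.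
  by rewrite /= -!m11 !mxE.
have gg0 : (g *m g^T) 0 0 != 0.
  by apply/negP => /eqP /sumsq_eq0 g0; move: hj; rewrite -/g g0 eqxx.
have ff0 : (f *m f^T) 0 0 = 0.
  move: h2 => /eqP; rewrite paddr_eq0; last 2 first.
  - by apply: mulr_ge0; apply: sumsq_ge0.
  - by rewrite -expr2 sqr_ge0.
  by case/andP; rewrite mulf_eq0 (negbTE gg0) orbF => /eqP.
have f0 := sumsq_eq0 ff0.
have a0 : a = 0.
  by move/eqP: ea; rewrite f0 scaler0 scaler_eq0 (negbTE rho0) => /eqP.
have b0 : b = 0.
  by move/eqP: eb; rewrite f0 scaler0 scaler_eq0 (negbTE rho0) => /eqP.
by move: pnz; rewrite (hAB p a0 b0) eqxx.
Qed.


Lemma Eij (R : comPzRingType) m (A B C D : 'M[R]_m) :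
  (forall y z : 'cV_m, A *m (y *m z^T + z *m y^T) *m C^T
                     + B *m (y *m z^T + z *m y^T) *m D^T = 0) ->
  forall (x y : 'cV_m) (i j : 'I_m),
  (A *m x) i 0 * (C *m y) j 0 + (A *m y) i 0 * (C *m x) j 0
  + (B *m x) i 0 * (D *m y) j 0 + (B *m y) i 0 * (D *m x) j 0 = 0.
Proof.
move=> h x y i j; have := congr1 (fun X : 'M[R]_m => X i j) (h x y).
have e : forall (P Q : 'M[R]_m) (u w : 'cV_m), P *m (u *m w^T) *m Q^T = (P *m u) *m (Q *m w)^T.
  by move=> P Q u w; rewrite trmx_mul !mulmxA.
have addE : forall (X Y : 'M[R]_m), (X + Y) i j = X i j + Y i j by move=> X Y; rewrite mxE.
rewrite /= !mulmxDr !mulmxDl !e !addE !outerE.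
by rewrite [(0 : 'M[R]_m) i j]mxE !addrA.
Qed.

Lemma entD (R : zmodType) p q (X Y : 'M[R]_(p,q)) i j : (X + Y) i j = X i j + Y i j.
Proof. by rewrite mxE. Qed.
Lemma entZ (R : pzRingType) p q c (X : 'M[R]_(p,q)) i j : (c *: X) i j = c * X i j.
Proof. by rewrite mxE. Qed.
Lemma ent0 (R : zmodType) p q i j : (0 : 'M[R]_(p,q)) i j = 0.
Proof. by rewrite mxE. Qed.

Lemma core (R : rcfType) m (A B C D : 'M[R]_m) :
  (1 < m)%N ->
  (forall p : 'rV_m, p *m A = 0 -> p *m B = 0 -> p = 0) ->
  (forall q : 'rV_m, q *m C = 0 -> q *m D = 0 -> q = 0) ->
  (forall y z : 'cV_m, A *m (y *m z^T + z *m y^T) *m C^T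
                     + B *m (y *m z^T + z *m y^T) *m D^T = 0) ->
  exists r1 r2 s1 s2 : R, [/\ (r1 != 0) || (r2 != 0), (s1 != 0) || (s2 != 0),
     r1 * s1 + r2 * s2 = 0, s1 *: A + s2 *: B = 0 & r1 *: C + r2 *: D = 0].
Proof.
move=> m1 hAB hCD hPhi.
have hPhi' : forall y z : 'cV_m, C *m (y *m z^T + z *m y^T) *m A^T
                     + D *m (y *m z^T + z *m y^T) *m B^T = 0.
  move=> y z; have := congr1 trmx (hPhi y z).
  rewrite !trD !trmx_mul !trmxK !trD !trmx_mul !trmxK trmx0 => <-.
  by rewrite !mulmxA [z *m y^T + _]addrC.
have e0 : delta_mx 0 (Ordinal (ltnW m1)) != 0 :> 'rV[R]_m.
  by apply/eqP => /matrixP/(_ 0 (Ordinal (ltnW m1))); rewrite !mxE !eqxx /= => /eqP; rewrite oner_eq0.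
have nz0 : exists x : 'cV_m, (A *m x != 0) || (B *m x != 0).
  case: (eqVneq A 0) => [A0|]; [case: (eqVneq B 0) => [B0|] |].
  - by case/eqP: e0; apply: hAB; rewrite ?A0 ?B0 mulmx0.
  - by move/mx_nz => [x hx]; exists x; rewrite hx orbT.
  - by move/mx_nz => [x hx]; exists x; rewrite hx.
have nz1 : exists x : 'cV_m, (C *m x != 0) || (D *m x != 0).
  case: (eqVneq C 0) => [C0|]; [case: (eqVneq D 0) => [D0|] |].
  - by case/eqP: e0; apply: hCD; rewrite ?C0 ?D0 mulmx0.
  - by move/mx_nz => [x hx]; exists x; rewrite hx orbT.
  - by move/mx_nz => [x hx]; exists x; rewrite hx.
have [x [hxA hxC]] : exists x : 'cV_m, ((A *m x != 0) || (B *m x != 0)) /\ ((C *m x != 0) || (D *m x != 0)).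
  case: nz0 => x1 h1; case: nz1 => x2 h2.
  case: (boolP ((C *m x1 != 0) || (D *m x1 != 0))) => h3; first by exists x1.
  case: (boolP ((A *m x2 != 0) || (B *m x2 != 0))) => h4; first by exists x2.
  exists (x1 + x2); rewrite !mulmxDr.
  move: h3 h4; rewrite !negb_or !negbK => /andP[/eqP-> /eqP->] /andP[/eqP-> /eqP->].
  by rewrite !addr0 !add0r.
have [i hi] : exists i, ((A *m x) i 0 != 0) || ((B *m x) i 0 != 0).
  by case/orP: hxA => /cV_nz [i hi]; exists i; rewrite hi ?orbT.
have [k hk] : exists k, ((C *m x) k 0 != 0) || ((D *m x) k 0 != 0).
  by case/orP: hxC => /cV_nz [k hk]; exists k; rewrite hk ?orbT.
have E := Eij hPhi.
have hrs : (A *m x) i 0 * (C *m x) k 0 + (B *m x) i 0 * (D *m x) k 0 = 0.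
  by have := E x x i k; lra.
have R2 : (C *m x) k 0 *: (A *m x) + (D *m x) k 0 *: (B *m x) = 0.
  apply/matrixP => j z; rewrite (ord1 z) entD !entZ ent0.
  by have := E x x j k; lra.
have R1 : (A *m x) i 0 *: (C *m x) + (B *m x) i 0 *: (D *m x) = 0.
  apply/matrixP => j z; rewrite (ord1 z) entD !entZ ent0.
  by have := E x x i j; lra.
have hy : forall y, exists a b : R,
   (C *m x) k 0 *: (A *m y) + (D *m x) k 0 *: (B *m y) = a *: (A *m x) + b *: (B *m x).
  move=> y; exists (- (C *m y) k 0), (- (D *m y) k 0).
  apply/matrixP => j z; rewrite (ord1 z) !entD !entZ.
  by have := E x y j k; lra.
have hy' : forall y, exists a b : R,
   (A *m x) i 0 *: (C *m y) + (B *m x) i 0 *: (D *m y) = a *: (C *m x) + b *: (D *m x).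
  move=> y; exists (- (A *m y) i 0), (- (B *m y) i 0).
  apply/matrixP => j z; rewrite (ord1 z) !entD !entZ.
  by have := E x y i j; lra.
exists ((A *m x) i 0), ((B *m x) i 0), ((C *m x) k 0), ((D *m x) k 0); split => //.
- apply: (kill m1 hCD hPhi' hk hi _ R1 hy').
  by move: hrs; lra.
- exact: (kill m1 hAB hPhi hi hk hrs R2 hy).
Qed.

Lemma rotAB (R : comPzRingType) (V : lmodType R) (u1 u2 : R) (a b : V) :
  u1 ^+ 2 + u2 ^+ 2 = 1 -> u1 *: b = u2 *: a ->
  a = u1 *: (u1 *: a + u2 *: b) /\ b = u2 *: (u1 *: a + u2 *: b).
Proof.
move=> h hb; split.
  rewrite scalerDr (scalerA u1 u2 b) mulrC -(scalerA u2 u1 b) hb !scalerA -scalerDl.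
  by rewrite -!expr2 h scale1r.
rewrite scalerDr (scalerA u2 u1 a) mulrC -(scalerA u1 u2 a) -hb !scalerA -scalerDl.
by rewrite -!expr2 h scale1r.
Qed.

Lemma sympZ (R : comPzRingType) n c (X : 'M[R]_(n.*2)) :
  (c *: X) *m sympl_form n *m (c *: X)^T = c ^+ 2 *: (X *m sympl_form n *m X^T).
Proof. by rewrite trZ -!scalemxAl -scalemxAr scalerA expr2. Qed.

Lemma sympN (R : comPzRingType) n (X : 'M[R]_(n.*2)) :
  symplectic X -> symplectic (- X).
Proof. by rewrite /symplectic trN mulNmx mulmxN mulNmx opprK. Qed.

Lemma mixE (R : rcfType) n (a : R) (X Y : 'M[R]_(n.*2)) :
  block_mx X 0 0 Y *m mix_mx n (a%:E)%E =
  block_mx ((Num.sqrt (1 + a ^+ 2))^-1 *: X) (((Num.sqrt (1 + a ^+ 2))^-1 * a) *: X)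
           ((- ((Num.sqrt (1 + a ^+ 2))^-1 * a)) *: Y) ((Num.sqrt (1 + a ^+ 2))^-1 *: Y).
Proof.
rewrite /mix_mx /= -scalemxAr mulmx_block !mul0mx !addr0 !add0r !mulmx1.
rewrite mulmxN !mul_mx_scalar scale_block_mx !scalerA scalerN -scaleNr.
by rewrite scalerA mulNr.
Qed.

Lemma sqrt_aux (R : rcfType) (u1 u2 : R) : u1 != 0 -> u1 ^+ 2 + u2 ^+ 2 = 1 ->
  (Num.sqrt (1 + (u2 / u1) ^+ 2))^-1 = `|u1|.
Proof.
move=> h0 h.
have e : 1 + (u2 / u1) ^+ 2 = (`|u1|^-1) ^+ 2.
  rewrite exprVn real_normK ?num_real //.
  have -> : (u1 ^+ 2)^-1 = (u1 ^+ 2 + u2 ^+ 2) / u1 ^+ 2 by rewrite h mul1r.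
  by field.
by rewrite e sqrtr_sqr normfV normr_id invrK.
Qed.

Lemma final_form (R : rcfType) n (N K : 'M[R]_(n.*2)) (u1 u2 : R) :
  u1 ^+ 2 + u2 ^+ 2 = 1 -> symplectic N -> symplectic K ->
  exists (X Y : 'M[R]_(n.*2)) (a : \bar R),
    symplectic X /\ symplectic Y /\
    block_mx (u1 *: N) (u2 *: N) ((- u2) *: K) (u1 *: K) = block_mx X 0 0 Y *m mix_mx n a.
Proof.
move=> h hN hK.
case: (ltrgt0P u1) => hu1.
- exists N, K, (u2 / u1)%:E; split=> //; split=> //.
  rewrite mixE sqrt_aux ?gtr0_norm ?lt0r_neq0 //.
  by have -> : u1 * (u2 / u1) = u2 by rewrite mulrC divfK // lt0r_neq0.
- exists (- N), (- K), (u2 / u1)%:E; split; first exact: sympN.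
  split; first exact: sympN.
  rewrite mixE sqrt_aux ?ltr0_norm ?ltr0_neq0 //.
  have -> : - u1 * (u2 / u1) = - u2 by rewrite mulNr mulrC divfK // ltr0_neq0.
  by rewrite !scalerN !scaleNr !opprK.
- move: h; rewrite hu1 expr0n /= add0r => /eqP; rewrite sqrf_eq1 => /orP[]/eqP->.
  + exists N, K, (+oo)%E; split=> //; split=> //=.
    rewrite mulmx_block !mulmx0 !mul0mx !addr0 !add0r mulmx1 mulmxN mulmx1.
    by rewrite !scale0r scale1r scaleN1r.
  + exists N, K, (-oo)%E; split=> //; split=> //=.
    rewrite mulmx_block !mulmx0 !mul0mx !addr0 !add0r mulmx1 mulmxN mulmx1.
    by rewrite !scale0r scaleN1r opprK scale1r.
Qed.

Theorem lemma2 (R : realType) (n : nat) (S : 'M[R]_(n.*2 + n.*2)) :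
  symplectic2 S ->
  (forall G : 'M[R]_(n.*2), cov_mx G ->
     exists A B : 'M[R]_(n.*2),
       S *m block_mx G 0 0 G *m S^T = block_mx A 0 0 B) ->
  (exists (X Y : 'M[R]_(n.*2)) (a : \bar R),
      symplectic X /\ symplectic Y /\ S = block_mx X 0 0 Y *m mix_mx n a)
  \/
  (exists (X Y : 'M[R]_(n.*2)) (g : \bar R),
      symplectic X /\ symplectic Y /\ S = block_mx 0 X Y 0 *m mix'_mx n g).
Proof.
move=> hS hG; left.
case: n S hS hG => [|n'] S hS hG.
  exists 0, 0, (0%:E)%E; split; [|split].
  - by apply/matrixP => [[]].
  - by apply/matrixP => [[]].
  - by apply/matrixP => [[]].
set n := n'.+1.
have m1 : (1 < n.*2)%N by rewrite /n doubleS.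
rewrite -(submxK S) in hS hG *.
set A := ulsubmx S in hS hG *; set B := ursubmx S in hS hG *.
set C := dlsubmx S in hS hG *; set D := drsubmx S in hS hG *.
move: hS; rewrite /symplectic2 /sympl_form2 tr_block_mx !mulmx_block.
rewrite ?mulmx0 ?mul0mx ?addr0 ?add0r => /eq_block_mx[hA _ _ hC].
have hAB : forall p : 'rV_(n.*2), p *m A = 0 -> p *m B = 0 -> p = 0.
  move=> p pA pB.
  have : p *m (A *m sympl_form n *m A^T + B *m sympl_form n *m B^T) = 0.
    by rewrite mulmxDr !mulmxA pA pB !mul0mx addr0.
  rewrite hA => /(congr1 (mulmx^~ (sympl_form n))).
  by rewrite -mulmxA sf_sq mul0mx mulmxN mulmx1 => /eqP; rewrite oppr_eq0 => /eqP.
have hCD : forall p : 'rV_(n.*2), p *m C = 0 -> p *m D = 0 -> p = 0.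
  move=> p pA pB.
  have : p *m (C *m sympl_form n *m C^T + D *m sympl_form n *m D^T) = 0.
    by rewrite mulmxDr !mulmxA pA pB !mul0mx addr0.
  rewrite hC => /(congr1 (mulmx^~ (sympl_form n))).
  by rewrite -mulmxA sf_sq mul0mx mulmxN mulmx1 => /eqP; rewrite oppr_eq0 => /eqP.
pose Phi G := A *m G *m C^T + B *m G *m D^T.
have PhiD : forall G1 G2, Phi (G1 + G2) = Phi G1 + Phi G2.
  by move=> G1 G2; rewrite /Phi !mulmxDr !mulmxDl addrACA.
have Phicov : forall G, cov_mx G -> Phi G = 0.
  move=> G /hG [A' [B']]; rewrite tr_block_mx !mulmx_block.
  by rewrite ?mulmx0 ?mul0mx ?addr0 ?add0r => /eq_block_mx[_ h _ _]; exact: h.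
have Phi1 : Phi 1%:M = 0.
  by have := Phicov _ (cov_rank1 (0 : 'cV[R]_(n.*2))); rewrite mul0mx addr0.
have Phixx : forall x : 'cV_(n.*2), Phi (x *m x^T) = 0.
  by move=> x; have := Phicov _ (cov_rank1 x); rewrite PhiD Phi1 add0r.
have hPhi : forall y z : 'cV_(n.*2), A *m (y *m z^T + z *m y^T) *m C^T
                     + B *m (y *m z^T + z *m y^T) *m D^T = 0.
  move=> y z; change (Phi (y *m z^T + z *m y^T) = 0); have := Phixx (y + z).
  by rewrite trD mulmxDl !mulmxDr !PhiD !Phixx add0r addr0.
have [r1 [r2 [s1 [s2 [hr hs hrs hsAB hrCD]]]]] := core m1 hAB hCD hPhi.
have hba := ortho hs hrs hsAB.
have hb0 : r1 *: B = r2 *: A by apply/eqP; rewrite -subr_eq0 hba.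
have rho0 : 0 < r1 ^+ 2 + r2 ^+ 2.
  rewrite lt_def paddr_eq0 ?sqr_ge0 // !sqrf_eq0 negb_and hr /=.
  by rewrite addr_ge0 ?sqr_ge0.
pose c := Num.sqrt (r1 ^+ 2 + r2 ^+ 2).
have c0 : 0 < c by rewrite sqrtr_gt0.
have cn0 : c != 0 by rewrite lt0r_neq0.
pose u1 := r1 / c; pose u2 := r2 / c.
have hu : u1 ^+ 2 + u2 ^+ 2 = 1.
  rewrite /u1 /u2 !expr_div_n -mulrDl sqr_sqrtr; last by rewrite ltW.
  by rewrite divff // lt0r_neq0.
have hb' : u1 *: B = u2 *: A.
  by rewrite /u1 /u2 [r1 / c]mulrC [r2 / c]mulrC -!scalerA hb0.
have hcd : u1 *: (- C) = u2 *: D.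
  apply/eqP; rewrite scalerN eq_sym -subr_eq0 opprK addrC.
  by rewrite /u1 /u2 [r1 / c]mulrC [r2 / c]mulrC -!scalerA -scalerDr hrCD scaler0.
set N := u1 *: A + u2 *: B.
set K := u1 *: D + u2 *: (- C).
have [eA eB] := rotAB hu hb'.
have [eD eC] := rotAB hu hcd.
rewrite -/N in eA eB; rewrite -/K in eD eC.
have eC' : C = (- u2) *: K by rewrite scaleNr -eC opprK.
have hN : symplectic N.
  move: hA; rewrite {1 2}eA {1 2}eB !sympZ -scalerDl hu scale1r; exact.
have hK : symplectic K.
  move: hC; rewrite {1 2}eC' {1 2}eD !sympZ -scalerDl sqrrN addrC hu scale1r; exact.
have [X [Y [a [hX [hY hXY]]]]] := final_form hu hN hK.
exists X, Y, a; split=> //; split=> //.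
by rewrite -hXY -eA -eB -eC' -eD.
Qed.
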